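(* Let $\rho$ be an $N$-qubit density matrix and let $\hat\rho,\hat\rho'$ be two independent Pauli shadows of $\rho$. Then $$\mathrm{Var}\big[\mathrm{Tr}(\hat\rho\hat\rho')\big]\le\mathbb{E}\big[\mathrm{Tr}(\hat\rho\hat\rho')^2\big]\le 8.5^N.$$
   Context: A Pauli shadow of an $N$-qubit state $\rho$ is obtained as follows: for each qubit $i$ choose a basis $\mathcal{B}_i\in\{\mathcal{X},\mathcal{Y},\mathcal{Z}\}$ independently and uniformly at random, measure a fresh copy of $\rho$ with each qubit $i$ in the eigenbasis of the Pauli operator $\mathcal{B}_i$, obtaining outcomes $s_i\in\{\pm\}$ (the post-measurement eigenstate being $|\mathcal{B}_i,s_i\rangle$), and set $\hat\rho=\bigotimes_{i=1}^N\big(3|\mathcal{B}_i,s_i\rangle\langle\mathcal{B}_i,s_i|-\mathbb{I}_2\big)$. Independent shadows use independent bases and independent copies of $\rho$. *)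

(* Defs.v *)
(* Complex scalars: an arbitrary numClosedFieldType C
   (e.g. the complex numbers over a real closed field, or algC). *)
From HB Require Import structures.
From mathcomp Require Import all_boot all_order all_algebra.
Set Implicit Arguments. Unset Strict Implicit. Unset Printing Implicit Defensive.
Import Order.TTheory GRing.Theory Num.Theory.
Local Open Scope ring_scope.

Section Shadows.
Variable C : numClosedFieldType.

Definition adj m n (M : 'M[C]_(m, n)) : 'M[C]_(n, m) := map_mx Num.conj (M^T).

Definition density_matrix (N : nat) (rho : 'M[C]_(2 ^ N)) : Prop :=
  [/\ adj rho = rho,
      (forall v : 'cV[C]_(2 ^ N), 0 <= (adj v *m rho *m v) 0 0)
    & \tr rho = 1].

(* Pauli bases: 0 = X, 1 = Y, 2 = Z.  Outcome s : bool, true = +, false = -. *)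
Definition sqrt2 : C := sqrtC 2.

(* eigenvector |B,s> (column vector) of the Pauli operator B with
   eigenvalue (+1 if s else -1) *)
Definition ket (B : 'I_3) (s : bool) : 'cV[C]_2 :=
  let sg : C := if s then 1 else -1 in
  match val B with
  | 0%N => \col_(a < 2) (if val a == 0%N then 1 / sqrt2 else sg / sqrt2)
  | 1%N => \col_(a < 2) (if val a == 0%N then 1 / sqrt2 else sg * 'i / sqrt2)
  | _   => \col_(a < 2) (if val a == 0%N then (if s then 1 else 0)
                                         else (if s then 0 else 1))
  end.

Definition pauli (B : 'I_3) : 'M[C]_2 :=
  match val B with
  | 0%N => \matrix_(a < 2, b < 2) (if val a == val b then 0 else 1)
  | 1%N => \matrix_(a < 2, b < 2)
             (if val a == val b then 0 else if val a == 0%N then - 'i else 'i)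
  | _   => \matrix_(a < 2, b < 2)
             (if val a == val b then (if val a == 0%N then 1 else -1) else 0)
  end.

Definition proj1q (B : 'I_3) (s : bool) : 'M[C]_2 := ket B s *m adj (ket B s).

Definition bit (k : nat) (i : nat) : 'I_2 := inord (odd (i %/ 2 ^ k)).

Definition tens (N : nat) (M : 'I_N -> 'M[C]_2) : 'M[C]_(2 ^ N) :=
  \matrix_(i, j) \prod_(k < N) M k (bit k i) (bit k j).

(* a measurement record: basis choices and outcomes for each qubit *)
Definition record (N : nat) : finType :=
  ({ffun 'I_N -> 'I_3} * {ffun 'I_N -> bool})%type.

(* probability of a record: (1/3)^N (uniform basis choice) times the
   Born probability Tr(rho ⊗_i |B_i,s_i><B_i,s_i|) *)
Definition rec_prob (N : nat) (rho : 'M[C]_(2 ^ N)) (w : record N) : C :=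
  (3%:R ^- N) * \tr (rho *m tens (fun i => proj1q (w.1 i) (w.2 i))).

Definition shadow (N : nat) (w : record N) : 'M[C]_(2 ^ N) :=
  tens (fun i => 3%:R *: proj1q (w.1 i) (w.2 i) - 1%:M).

Definition E2 (N : nat) (rho : 'M[C]_(2 ^ N))
  (f : 'M[C]_(2 ^ N) -> 'M[C]_(2 ^ N) -> C) : C :=
  \sum_(w : record N) \sum_(w' : record N)
     rec_prob rho w * rec_prob rho w' * f (shadow w) (shadow w').

Definition trprod (N : nat) (A B : 'M[C]_(2 ^ N)) : C := \tr (A *m B).

Definition Var2 (N : nat) (rho : 'M[C]_(2 ^ N))
  (f : 'M[C]_(2 ^ N) -> 'M[C]_(2 ^ N) -> C) : C :=
  E2 rho (fun A B => (f A B - E2 rho f) ^+ 2).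

End Shadows.

(* Main.v *)
Require Import Defs.
From mathcomp Require Import all_boot all_order all_algebra.
From mathcomp Require Import ring zify.
Import Order.TTheory GRing.Theory Num.Theory.
Local Open Scope ring_scope.

Lemma bits_inj (N i j : nat) : (i < 2^N)%N -> (j < 2^N)%N ->
  (forall k, (k < N)%N -> odd (i %/ 2^k) = odd (j %/ 2^k)) -> i = j.
Proof.
elim: N i j => [|N IH] i j.
  by rewrite expn0 !ltnS !leqn0 => /eqP -> /eqP ->.
move=> hi hj H.
rewrite -[i]odd_double_half -[j]odd_double_half.
have h0 := H 0%N (ltn0Sn _). rewrite expn0 !divn1 in h0.
rewrite h0 (IH i./2 j./2) //.
- by rewrite -divn2 ltn_divLR // -expnSr.
- by rewrite -divn2 ltn_divLR // -expnSr.
move=> k hk; have := H k.+1 hk.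
by rewrite expnS !divnMA !divn2.
Qed.

Lemma bit_val k i : nat_of_ord (bit k i) = odd (i %/ 2^k).
Proof. by rewrite /bit inordK //; case: odd. Qed.

Lemma bits_inj_ord N (i j : 'I_(2^N)) :
  (forall k : 'I_N, bit k i = bit k j) -> i = j.
Proof.
move=> H; apply/val_inj/(@bits_inj N); rewrite ?ltn_ord // => k hk.
have := congr1 val (H (Ordinal hk)); rewrite /= !bit_val.
by case: odd; case: odd.
Qed.

Lemma sum_bits (R : comNzRingType) N (F : 'I_N -> 'I_2 -> R) :
  \sum_(i < 2^N) \prod_(k < N) F k (bit k i) = \prod_(k < N) \sum_(a < 2) F k a.
Proof.
rewrite bigA_distr_bigA /=.
pose phi := fun i : 'I_(2^N) => [ffun k : 'I_N => bit k i].
have inj : injective phi.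
  move=> i j /ffunP H; apply: bits_inj_ord => k.
  by have := H k; rewrite !ffunE.
have bij : bijective phi.
  apply: (inj_card_bij inj); by rewrite card_ffun !card_ord.
rewrite (reindex phi) /=; last by apply: onW_bij.
by apply: eq_bigr => i _; apply: eq_bigr => k _; rewrite ffunE.
Qed.

Lemma tens_mul (C : numClosedFieldType) N (M M' : 'I_N -> 'M[C]_2) :
  tens M *m tens M' = tens (fun k => M k *m M' k).
Proof.
apply/matrixP => i j; rewrite !mxE.
under eq_bigr => l _ do rewrite !mxE -big_split /=.
rewrite (@sum_bits _ N (fun k a => M k (bit k i) a * M' k a (bit k j))).
by apply: eq_bigr => k _; rewrite mxE.
Qed.

Lemma tr_tens (C : numClosedFieldType) N (M : 'I_N -> 'M[C]_2) :
  \tr (tens M) = \prod_(k < N) \tr (M k).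
Proof.
rewrite /mxtrace; under eq_bigr => i _ do rewrite mxE.
by rewrite (@sum_bits _ N (fun k a => M k a a)).
Qed.
Lemma conj_isqrt2 (C : numClosedFieldType) : ((sqrt2 C)^-1)^* = (sqrt2 C)^-1.
Proof. by apply/CrealP; rewrite rpredV; apply/ger0_real; rewrite sqrtC_ge0 ler0n. Qed.

Lemma key (C : numClosedFieldType) (a b : C) :
  (a / sqrt2 C) * (b / sqrt2 C)^* = a * b^* / 2%:R.
Proof.
have h : sqrt2 C * sqrt2 C = 2%:R by rewrite -expr2 sqrtCK.
by rewrite rmorphM /= conj_isqrt2 mulrACA -invfM h.
Qed.

Definition pent (C : numClosedFieldType) (b : nat) (s : bool) (a c : nat) : C :=
 let sg : C := if s then 1 else -1 in
 match b with
 | 0%N => if a == c then 2%:R^-1 else sg / 2%:R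
 | 1%N => if a == c then 2%:R^-1 else if a == 0%N then - (sg * 'i) / 2%:R else sg * 'i / 2%:R
 | _ => if a == c then (if a == 0%N then (if s then 1 else 0) else (if s then 0 else 1)) else 0
 end.

Lemma projE (C : numClosedFieldType) (b : 'I_3) (s : bool) (a c : 'I_2) :
  proj1q C b s a c = pent C (val b) s (val a) (val c).
Proof.
rewrite /proj1q !mxE big_ord1 !mxE /ket /pent.
case: b => [[|[|[|b]]] hb] //=; case: s; case: a => [[|[|a]] ha] //=;
  case: c => [[|[|c]] hc] //=; rewrite !mxE /= ?key.
all: rewrite ?rmorphN ?rmorph1 ?rmorph0 ?rmorphM ?conjCi /= ?mulrN ?mulNr ?opprK ?mul1r ?mulr1 ?mulr0 ?mul0r ?rmorph1.
all: rewrite /= ?rmorphN1 ?conjCi ?mul1r ?mulN1r ?mulrN ?mulNr ?opprK -?expr2 ?sqrCi.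
all: try field.
all: by [].
Qed.

Lemma sum_proj (C : numClosedFieldType) (b : 'I_3) (a c : 'I_2) :
  \sum_(t : bool) proj1q C b t a c = (a == c)%:R.
Proof.
rewrite big_bool /= !projE /pent.
case: b => [[|[|[|b]]] hb] //=; case: a => [[|[|a]] ha] //=;
  case: c => [[|[|c]] hc] //=.
all: rewrite /eq_op /= ?mulN1r; try field.
all: by [].
Qed.

Definition fval (C : numClosedFieldType) (b b' : 'I_3) (s s' : bool) : C :=
  if val b == val b' then (if s == s' then 5%:R else -4%:R) else 2%:R^-1.

Lemma sigE (C : numClosedFieldType) (b : 'I_3) (s : bool) (a c : 'I_2) :
  (3%:R *: proj1q C b s - 1%:M) a c = 3%:R * pent C (val b) s (val a) (val c) - (val a == val c)%:R.
Proof. by rewrite [proj1q C b s]lock !mxE -lock projE. Qed.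

Lemma trf (C : numClosedFieldType) (b b' : 'I_3) (s s' : bool) :
  \tr ((3%:R *: proj1q C b s - 1%:M) *m (3%:R *: proj1q C b' s' - 1%:M)) = fval C b b' s s'.
Proof.
rewrite [3%:R *: proj1q C b s - 1%:M]lock [3%:R *: proj1q C b' s' - 1%:M]lock.
rewrite /mxtrace !big_ord_recr big_ord0 /= !mxE !big_ord_recr !big_ord0 /= -!lock !sigE /pent /fval /=.
case: b => [[|[|[|b]]] hb] //=; case: b' => [[|[|[|b']]] hb'] //=; case: s; case: s' => /=.
all: rewrite ?mulN1r; try field.
all: try by [].
all: first [ transitivity (2%:R^-1 - 9%:R / 2%:R * 'i^+2 : C); [field | rewrite sqrCi; field]
           | transitivity (2%:R^-1 + 9%:R / 2%:R * 'i^+2 : C); [field | rewrite sqrCi; field] ].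
all: by [].
Qed.

Lemma tens_sum (C : numClosedFieldType) N (B : {ffun 'I_N -> 'I_3}) :
  \sum_(s : {ffun 'I_N -> bool}) tens (fun k => proj1q C (B k) (s k)) = 1%:M.
Proof.
apply/matrixP => i j; rewrite summxE.
under eq_bigr => s _ do rewrite mxE.
rewrite -(bigA_distr_bigA (fun k (t : bool) => proj1q C (B k) t (bit k i) (bit k j))) /=.
under eq_bigr => k _ do rewrite sum_proj.
rewrite mxE; case: (eqVneq i j) => [->|hij] /=.
  by apply: big1 => k _; rewrite eqxx.
have [k hk] : exists k : 'I_N, bit k i != bit k j.
  apply/existsP; apply: contraNT hij => /existsPn H.
  apply/eqP/bits_inj_ord => k; apply/eqP.
  by have := H k; rewrite negbK.
by rewrite (bigD1 k) //= (negbTE hk) mul0r.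
Qed.

Lemma prob_sum (C : numClosedFieldType) N (rho : 'M[C]_(2^N)) (B : {ffun 'I_N -> 'I_3}) :
  density_matrix rho -> \sum_(s : {ffun 'I_N -> bool}) rec_prob rho (B, s) = 3%:R ^- N.
Proof.
case=> _ _ tr1.
rewrite /rec_prob -mulr_sumr /=.
rewrite -(raddf_sum (@mxtrace _ _)) -mulmx_sumr /= tens_sum mulmx1 tr1 mulr1 //.
Qed.

Lemma prob_ge0 (C : numClosedFieldType) N (rho : 'M[C]_(2^N)) (w : record N) :
  density_matrix rho -> 0 <= rec_prob rho w.
Proof.
case=> _ Hpos _.
rewrite /rec_prob; apply: mulr_ge0; first by rewrite invr_ge0 exprn_ge0 // ler0n.
pose v : 'cV[C]_(2^N) := \col_i \prod_(k < N) ket C (w.1 k) (w.2 k) (bit k i) 0.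
have -> : tens (fun i => proj1q C (w.1 i) (w.2 i)) = v *m adj v.
  apply/matrixP => i j; rewrite !mxE big_ord1 !mxE rmorph_prod -big_split /=.
  by apply: eq_bigr => k _; rewrite /proj1q !mxE big_ord1 !mxE.
rewrite mulmxA mxtrace_mulC mulmxA /mxtrace big_ord1.
exact: Hpos.
Qed.

Lemma trprod_shadow (C : numClosedFieldType) N (w w' : record N) :
  trprod (shadow C w) (shadow C w') = \prod_(k < N) fval C (w.1 k) (w'.1 k) (w.2 k) (w'.2 k).
Proof.
rewrite /trprod /shadow tens_mul tr_tens; apply: eq_bigr => k _; exact: trf.
Qed.

Definition hh (C : numClosedFieldType) (b b' : 'I_3) : C :=
  if val b == val b' then 25%:R else 4%:R^-1.

Lemma fval_sq (C : numClosedFieldType) b b' s s' :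
  0 <= fval C b b' s s' ^+ 2 <= hh C b b'.
Proof.
rewrite /fval /hh; case: ifP => _; [case: ifP => _|].
- by rewrite -natrX ler0n lexx.
- by rewrite sqrrN -natrX ler0n ler_nat.
- by rewrite exprVn -natrX invr_ge0 ler0n lexx.
Qed.

Lemma fval_real (C : numClosedFieldType) b b' s s' : fval C b b' s s' \is Num.real.
Proof.
rewrite /fval; case: ifP => _; [case: ifP => _|].
- exact: realn.
- by rewrite rpredN realn.
- by rewrite rpredV realn.
Qed.

Theorem lemma3 (C : numClosedFieldType) (N : nat) (rho : 'M[C]_(2 ^ N)) :
  density_matrix rho ->
  Var2 rho (@trprod C N) <= E2 rho (fun A B => trprod A B ^+ 2) /\
  E2 rho (fun A B => trprod A B ^+ 2) <= (17%:R / 2%:R) ^+ N.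
Proof.
move=> Hrho.
have p0 : forall w, 0 <= rec_prob rho w by move=> w; exact: prob_ge0.
have psum : forall B, \sum_(s : {ffun 'I_N -> bool}) rec_prob rho (B, s) = 3%:R ^- N.
  by move=> B; exact: prob_sum.
have pairE : forall (G : record N -> C),
    \sum_(w : record N) G w = \sum_(B : {ffun 'I_N -> 'I_3}) \sum_(s : {ffun 'I_N -> bool}) G (B, s).
  by move=> G; rewrite pair_big /=; apply: eq_bigr => -[].
move: p0 psum; rewrite /Var2 /E2; generalize (rec_prob rho) => p p0 psum.
have p1 : \sum_(w : record N) p w = 1.
  rewrite pairE; under eq_bigr do rewrite psum.
  rewrite sumr_const card_ffun !card_ord -[_ *+ _]mulr_natr natrX ?mul1r mulVf //.
  by rewrite expf_neq0 // pnatr_eq0.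
have pp1 : \sum_(w : record N) \sum_(w' : record N) p w * p w' = 1.
  under eq_bigr do rewrite -mulr_sumr p1 mulr1.
  exact: p1.
set m := \sum_(w : record N) \sum_(w' : record N) p w * p w' * trprod (shadow C w) (shadow C w').
have mreal : m \is Num.real.
  rewrite /m; apply: rpred_sum => w _; apply: rpred_sum => w' _.
  apply: rpredM; first by apply: rpredM; apply: ger0_real.
  by rewrite trprod_shadow; apply: rpred_prod => k _; exact: fval_real.
set E := \sum_(w : record N) \sum_(w' : record N) p w * p w' * trprod (shadow C w) (shadow C w') ^+ 2.
have VE : \sum_(w : record N) \sum_(w' : record N) p w * p w' *
            (trprod (shadow C w) (shadow C w') - m) ^+ 2 = E - m ^+ 2.
  transitivity (\sum_(w : record N) \sum_(w' : record N)
     (p w * p w' * trprod (shadow C w) (shadow C w') ^+ 2 +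
      (m ^+ 2 * (p w * p w') -
       (2%:R * m) * (p w * p w' * trprod (shadow C w) (shadow C w'))))).
    by apply: eq_bigr => w _; apply: eq_bigr => w' _; ring.
  under eq_bigr do rewrite big_split sumrB.
  rewrite big_split sumrB /=.
  under [X in _ + (X - _)]eq_bigr do rewrite -mulr_sumr -mulr_sumr p1 mulr1.
  under [X in _ + (_ - X)]eq_bigr do rewrite -mulr_sumr.
  rewrite -!mulr_sumr p1 mulr1 -/m -/E.
  ring.
split.
  rewrite VE lerBlDr lerDl.
  exact: real_exprn_even_ge0.
apply: le_trans (_ : _ <= \sum_(w : record N) \sum_(w' : record N)
    p w * p w' * \prod_(k < N) hh C (w.1 k) (w'.1 k)) _.
  apply: ler_sum => w _; apply: ler_sum => w' _.
  rewrite trprod_shadow -prodrXl; apply: ler_wpM2l; first by rewrite mulr_ge0.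
  by apply: ler_prod => k _; exact: fval_sq.
have inner : forall B : {ffun 'I_N -> 'I_3},
    \sum_(w' : record N) p w' * \prod_(k < N) hh C (B k) (w'.1 k) =
    3%:R ^- N * \sum_(B' : {ffun 'I_N -> 'I_3}) \prod_(k < N) hh C (B k) (B' k).
  move=> B; rewrite pairE /= mulr_sumr; apply: eq_bigr => B' _.
  by rewrite -(psum B') mulr_suml.
under eq_bigr do under eq_bigr do rewrite -mulrA.
under eq_bigr do rewrite -mulr_sumr inner.
rewrite pairE /=.
under eq_bigr do rewrite -mulr_suml psum.
rewrite le_eqVlt; apply/orP; left; apply/eqP.
pose g (b b' : 'I_3) : C := 3%:R^-1 * (3%:R^-1 * hh C b b').
transitivity (\sum_(B : {ffun 'I_N -> 'I_3}) \sum_(B' : {ffun 'I_N -> 'I_3})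
                \prod_(k < N) g (B k) (B' k)).
  apply: eq_bigr => B _; rewrite mulr_sumr mulr_sumr; apply: eq_bigr => B' _.
  by rewrite /g !big_split /= !prodr_const !card_ord exprVn.
transitivity (\sum_(B : {ffun 'I_N -> 'I_3}) \prod_(k < N) \sum_(b' : 'I_3) g (B k) b').
  by apply: eq_bigr => B _; rewrite bigA_distr_bigA.
rewrite -(bigA_distr_bigA (fun k (b : 'I_3) => \sum_(b' : 'I_3) g b b')) /=.
rewrite prodr_const card_ord.
congr (_ ^+ _).
rewrite /g /hh !big_ord_recr !big_ord0 /=.
field. by [].
Qed.
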